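(* Let $n,p\ge1$ be integers, let $\mathbf{A}^{p+1}_{n+1}$ be as defined in the context, and let $k=\max\{n+1,p\}$. Then $k.a\vee k.(\sim a)=\top$ for every $a\in A$, whereas there exists $a\in A$ with $n.a\vee n.(\sim a)\ne\top$. That is, $\mathbf{A}^{p+1}_{n+1}$ satisfies the identity $k.x\vee k.\neg x\approx\top$ but not the identity $n.x\vee n.\neg x\approx\top$.
   Context: Order $\mathbb{Z}\times\mathbb{Z}$ lexicographically: $(m,r)\preccurlyeq(k,s)$ iff $m<k$, or $m=k$ and $r\le s$; addition/subtraction of pairs is componentwise, and $\min,\max$ of pairs refer to $\preccurlyeq$. For an integer $n\ge1$ let $L^\omega_{n+1}=\{(m,r)\in\mathbb{Z}^2:(0,0)\preccurlyeq(m,r)\preccurlyeq(n,0)\}$ with $x\ast y=\max\{(0,0),x+y-(n,0)\}$ and $x\to y=\min\{(n,0),(n,0)-x+y\}$. For an integer $p\ge1$ let $L_{p+1}=\{0,1,\dots,p\}$ with $\alpha\ast\beta=\max\{0,\alpha+\beta-p\}$. Define $$A=A^{p+1}_{n+1}=\{\langle(m,r),\alpha\rangle:(m,r)\in L^\omega_{n+1},\ \alpha\in\{0,p\}\}\cup\{\langle(m,r),\alpha\rangle:(0,0)\preccurlyeq(m,r)\preccurlyeq(n-1,0),\ 0<\alpha<p\}.$$ Order: $\langle(m,r),\alpha\rangle\le\langle(k,s),\beta\rangle$ iff one of: (o1) $\alpha\neq0$, $\alpha\le\beta$ and $(m,r)\preccurlyeq(k,s)$; (o2) $\alpha=\beta=0$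 and $(k,s)\preccurlyeq(m,r)$; (o3) $\alpha=0$, $\beta\ne0$ and $(n-1,0)\preccurlyeq(m+k,r+s)$. $\wedge,\vee$ denote meet and join for $\le$. Put $\bot=\langle(n,0),0\rangle$, $\top=\langle(n,0),p\rangle$. For $a=\langle(m,r),\alpha\rangle$, $b=\langle(k,s),\beta\rangle\in A$ define $a\odot b$ by: (P1) if $\alpha,\beta\ge1$ and $\alpha+\beta>p$: $a\odot b=\langle(m,r)\ast(k,s),\alpha+\beta-p\rangle$; (P2) if $\alpha,\beta\ge1$ and $\alpha+\beta\le p$: $a\odot b=\langle\min\{(n,0),(2n-(m+k+1),-(r+s))\},0\rangle$; (P3) if $\alpha\ge1$, $\beta=0$: $a\odot b=\langle(m,r)\to(k,s),0\rangle$, and if $\alpha=0$, $\beta\ge1$: $a\odot b=\langle(k,s)\to(m,r),0\rangle$; (P4) if $\alpha=\beta=0$: $a\odot b=\langle\min\{(n,0),(m+k+1,r+s)\},0\rangle$. Define $\sim\langle(m,r),\alpha\rangle=\langle(m,r),p-\alpha\rangle$ if $\alpha\in\{0,p\}$, and $\sim\langle(m,r),\alpha\rangle=\langle(n-1-m,-r),p-\alpha\rangle$ if $0<\alpha<p$. Define $a\Rightarrow b=\sim(a\odot\sim b)$ (so $\sim a=a\Rightarrow\bot$, interpreting $\neg x=x\to\bot$). The algebra $\mathbf{A}^{p+1}_{n+1}$ is $\langle A;\odot,\Rightarrow,\wedge,\vee,\bot,\top\rangle$. Terms: $a^0=\top$, $a^{k+1}=a\odot a^k$; $a\oplus b=\sim(\sim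 a\odot\sim b)$; $0.a=\bot$, $(k+1).a=a\oplus k.a$. *)

(* Defs.v *)
From Stdlib Require Import ZArith Lia Bool.
Open Scope Z_scope.

Definition pair := (Z * Z)%type.

Definition lexle (x y : pair) : Prop :=
  fst x < fst y \/ (fst x = fst y /\ snd x <= snd y).

Definition lexleb (x y : pair) : bool :=
  (fst x <? fst y) || ((fst x =? fst y) && (snd x <=? snd y)).

Definition pmin (x y : pair) : pair := if lexleb x y then x else y.
Definition pmax (x y : pair) : pair := if lexleb x y then y else x.
Definition padd (x y : pair) : pair := (fst x + fst y, snd x + snd y).
Definition psub (x y : pair) : pair := (fst x - fst y, snd x - snd y).

(* operations of L^omega_{n+1} *)
Definition ast (n : Z) (x y : pair) : pair := pmax (0, 0) (psub (padd x y) (n, 0)).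
Definition arr (n : Z) (x y : pair) : pair := pmin (n, 0) (padd (psub (n, 0) x) y).

Definition elt := (pair * Z)%type.

Definition inA (n p : Z) (a : elt) : Prop :=
  let '(x, al) := a in
  ((al = 0 \/ al = p) /\ lexle (0, 0) x /\ lexle x (n, 0)) \/
  (0 < al < p /\ lexle (0, 0) x /\ lexle x (n - 1, 0)).

Definition leA (n : Z) (a b : elt) : Prop :=
  let '(x, al) := a in let '(y, be) := b in
  (al <> 0 /\ al <= be /\ lexle x y) \/
  (al = 0 /\ be = 0 /\ lexle y x) \/
  (al = 0 /\ be <> 0 /\ lexle (n - 1, 0) (padd x y)).

Definition botA (n : Z) : elt := ((n, 0), 0).
Definition topA (n p : Z) : elt := ((n, 0), p).

Definition is_join (n p : Z) (a b z : elt) : Prop :=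
  inA n p z /\ leA n a z /\ leA n b z /\
  (forall w, inA n p w -> leA n a w -> leA n b w -> leA n z w).

Definition odot (n p : Z) (a b : elt) : elt :=
  let '(x, al) := a in let '(y, be) := b in
  if (1 <=? al) && (1 <=? be) then
    if p <? al + be then (ast n x y, al + be - p)
    else (pmin (n, 0) (2 * n - (fst x + fst y + 1), - (snd x + snd y)), 0)
  else if (1 <=? al) then (arr n x y, 0)
  else if (1 <=? be) then (arr n y x, 0)
  else (pmin (n, 0) (fst x + fst y + 1, snd x + snd y), 0).

Definition negA (n p : Z) (a : elt) : elt :=
  let '(x, al) := a in
  if (al =? 0) || (al =? p) then (x, p - al)
  else ((n - 1 - fst x, - snd x), p - al).

Definition oplus (n p : Z) (a b : elt) : elt :=
  negA n p (odot n p (negA n p a) (negA n p b)).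

Fixpoint nmul (n p : Z) (k : nat) (a : elt) : elt :=
  match k with
  | O => botA n
  | S k' => oplus n p a (nmul n p k' a)
  end.

(* Main.v *)
Require Import Defs.
From Stdlib Require Import ZArith Lia.
Open Scope Z_scope.

Ltac zsplit := match goal with
 | |- context [Z.ltb ?a ?b] => destruct (Z.ltb_spec a b)
 | |- context [Z.leb ?a ?b] => destruct (Z.leb_spec a b)
 | |- context [Z.eqb ?a ?b] => destruct (Z.eqb_spec a b)
end.
Ltac pairs := repeat (apply pair_equal_spec; split).
Ltac crunch := unfold oplus, negA, odot, ast, arr, pmin, pmax, psub, padd, lexleb, botA in *; cbn [fst snd] in *;
  repeat (zsplit; cbn [andb orb fst snd negb] in *; try (exfalso; lia)); pairs; lia.

Definition cap (n s p : Z) : pair := if s <? p then (n-1,0) else (n,0).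

Lemma step n p x y al be : 0 < al <= p -> 0 < be <= p ->
  oplus n p (x,al) (y,be) =
  (pmin (cap n (al+be) p) (fst x + fst y + 1, snd x + snd y), Z.min (al+be) p).
Proof.
  intros. destruct x as [m r], y as [k s]. unfold cap. crunch.
Qed.

Ltac lexcrunch := unfold lexle, pmin, pmax, psub, padd, lexleb, cap, botA, topA in *; cbn [fst snd] in *;
  repeat (zsplit; cbn [andb orb fst snd negb] in *; try (exfalso; lia)); try lia; try (pairs; lia).

Lemma step_bot n p x al : 0 < al <= p -> lexle (0,0) x ->
  lexle x (if al <? p then (n-1,0) else (n,0)) -> oplus n p (x,al) (botA n) = (x,al).
Proof.
  intros. destruct x as [m r]. unfold lexle in *; cbn [fst snd] in *.
  destruct (Z.ltb_spec al p) in *; crunch.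
Qed.

Lemma zero_step n p x y : 0 < p ->
  oplus n p (x,0) (y,0) = (pmax (0,0) (psub (padd x y) (n,0)), 0).
Proof. intros. destruct x as [m r], y as [k s]. crunch. Qed.

Lemma pmax_ge v : lexle (0,0) (pmax (0,0) v).
Proof. destruct v as [a b]. lexcrunch. Qed.

Lemma zero_inv n p x : 0 <= n -> 0 < p -> forall j,
  exists y, nmul n p j (x,0) = (y,0) /\ lexle (0,0) y.
Proof.
  intros Hn Hp j. induction j as [|j IH].
  - exists (n,0). split; [reflexivity|]. unfold lexle; simpl; lia.
  - destruct IH as [y [E L]]. simpl. rewrite E, zero_step by lia.
    eexists; split; [reflexivity|]. apply pmax_ge.
Qed.

Lemma pos_inv n p x al : 1 <= n -> 0 < al <= p -> lexle (0,0) x ->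
  lexle x (if al <? p then (n-1,0) else (n,0)) -> forall j, (1 <= j)%nat ->
  exists y be, nmul n p j (x,al) = (y,be) /\ 0 < be <= p /\
    Z.min (Z.of_nat j) p <= be /\ lexle (Z.min (Z.of_nat j - 1) (n-1), 0) y.
Proof.
  intros Hn Ha L1 L2 j Hj. induction j as [|j IH]; [lia|].
  destruct j as [|j].
  - simpl. rewrite step_bot by assumption. exists x, al. split; [reflexivity|].
    destruct x as [m r]. lexcrunch.
  - destruct (IH ltac:(lia)) as [y [be [E [B1 [B2 B3]]]]].
    change (nmul n p (S (S j)) (x,al)) with (oplus n p (x,al) (nmul n p (S j) (x,al))).
    rewrite E, step by lia.
    eexists; eexists; split; [reflexivity|].
    destruct x as [m r], y as [k s]. lexcrunch.
Qed.

Lemma pos_top n p x al k : 1 <= n -> 0 < al <= p -> lexle (0,0) x ->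
  lexle x (if al <? p then (n-1,0) else (n,0)) ->
  (n + 1 <= Z.of_nat k) -> p <= Z.of_nat k ->
  nmul n p k (x,al) = topA n p.
Proof.
  intros Hn Ha L1 L2 Hk1 Hk2.
  destruct k as [|k]; [lia|].
  destruct (pos_inv n p x al Hn Ha L1 L2 k ltac:(lia)) as [y [be [E [B1 [B2 B3]]]]].
  change (nmul n p (S k) (x,al)) with (oplus n p (x,al) (nmul n p k (x,al))).
  rewrite E, step by lia. destruct x as [m r], y as [a b]. unfold topA.
  lexcrunch; pairs; lia.
Qed.

Lemma top_le n p y : 0 <= n -> 0 < p -> lexle (0,0) y -> leA n (y,0) (topA n p).
Proof. intros. destruct y. unfold leA, topA. right; right. lexcrunch. Qed.

Lemma top_refl n p : 0 < p -> leA n (topA n p) (topA n p).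
Proof. intros. unfold leA, topA. left. lexcrunch. Qed.

Lemma join_top n p b c : 0 <= n -> 0 < p -> (b = topA n p \/ c = topA n p) ->
  leA n b (topA n p) -> leA n c (topA n p) -> is_join n p b c (topA n p).
Proof.
  intros Hn Hp H Hb Hc. unfold is_join. split; [|split; [|split]]; auto.
  - unfold inA, topA. left. lexcrunch.
  - intros w _ H1 H2. destruct H; subst; auto.
Qed.

Lemma nmul_zero n p j : 1 <= n -> 0 < p -> (1 <= j)%nat -> nmul n p j ((0,0),0) = ((0,0),0).
Proof.
  intros Hn Hp Hj. induction j as [|j IH]; [lia|]. destruct j as [|j].
  - simpl. unfold botA. rewrite zero_step by lia. lexcrunch.
  - change (nmul n p (S (S j)) ((0,0),0)) with (oplus n p ((0,0),0) (nmul n p (S j) ((0,0),0))).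
    rewrite IH by lia. rewrite zero_step by lia. lexcrunch.
Qed.

Lemma nmul_p n p j : 1 <= n -> 0 < p -> (1 <= j)%nat -> Z.of_nat j <= n ->
  nmul n p j ((0,0),p) = ((Z.of_nat j - 1,0),p).
Proof.
  intros Hn Hp Hj Hjn. induction j as [|j IH]; [lia|]. destruct j as [|j].
  - simpl. rewrite step_bot by (lexcrunch). f_equal.
  - change (nmul n p (S (S j)) ((0,0),p)) with (oplus n p ((0,0),p) (nmul n p (S j) ((0,0),p))).
    rewrite IH by lia. rewrite step by lia. lexcrunch; pairs; lia.
Qed.


Lemma caseA N P k m r al : 1 <= N -> 1 <= P -> N + 1 <= Z.of_nat k -> P <= Z.of_nat k ->
  inA N P ((m,r),al) ->
  is_join N P (nmul N P k ((m,r),al)) (nmul N P k (negA N P ((m,r),al))) (topA N P).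
Proof.
  intros HN HP Hk1 Hk2 HA. unfold inA in HA.
    destruct HA as [[[H0|H0] [L1 L2]] | [H0 [L1 L2]]].
    + subst al.
      assert (E : negA N P ((m,r),0) = ((m,r),P)) by (unfold negA; lexcrunch; pairs; lia).
      rewrite E. destruct (zero_inv N P (m,r) ltac:(lia) ltac:(lia) k) as [y [Ey Ly]].
      change Defs.pair with (Z*Z)%type in *. rewrite Ey. erewrite pos_top by (lexcrunch). apply join_top; try lia; auto.
      apply top_le; auto; lia. apply top_refl; lia.
    + subst al.
      assert (E : negA N P ((m,r),P) = ((m,r),0)) by (unfold negA; lexcrunch; pairs; lia).
      rewrite E. destruct (zero_inv N P (m,r) ltac:(lia) ltac:(lia) k) as [y [Ey Ly]].
      change Defs.pair with (Z*Z)%type in *. rewrite Ey. erewrite pos_top by (lexcrunch). apply join_top; try lia; auto.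
      apply top_refl; lia. apply top_le; auto; lia.
    + assert (E : negA N P ((m,r),al) = ((N-1-m,-r),P-al)) by (unfold negA; lexcrunch; pairs; lia).
      rewrite E. change Defs.pair with (Z*Z)%type in *. rewrite !pos_top by (lexcrunch). apply join_top; try lia; auto; apply top_refl; lia.
Qed.

Lemma caseB N P : 1 <= N -> 1 <= P -> (1 <= Z.to_nat N)%nat ->
  exists z, is_join N P (nmul N P (Z.to_nat N) ((0,0),0)) (nmul N P (Z.to_nat N) (negA N P ((0,0),0))) z /\ z <> topA N P.
Proof.
  intros HN HP Hn.
    assert (E : negA N P ((0,0),0) = ((0,0),P)) by (unfold negA; lexcrunch).
      rewrite E. rewrite nmul_zero by lia. rewrite nmul_p by lia.
      exists ((N-1,0),P). split.
      * unfold is_join. split; [|split; [|split]].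
        -- unfold inA. left. lexcrunch.
        -- unfold leA. right; right. lexcrunch.
        -- unfold leA. left. lexcrunch.
        -- intros w _ _ H. replace N with (Z.of_nat (Z.to_nat N)) at 2 by lia. exact H.
      * unfold topA. intro H. injection H. lia.
Qed.

Theorem mainTheorem16 (n p : nat) (hn : (1 <= n)%nat) (hp : (1 <= p)%nat) :
  let N := Z.of_nat n in
  let P := Z.of_nat p in
  let k := Nat.max (n + 1) p in
  (forall a, inA N P a ->
     is_join N P (nmul N P k a) (nmul N P k (negA N P a)) (topA N P)) /\
  (exists a, inA N P a /\
     exists z, is_join N P (nmul N P n a) (nmul N P n (negA N P a)) z /\
               z <> topA N P).
Proof.
  intros N P k.
  assert (HN : 1 <= N) by lia. assert (HP : 1 <= P) by lia.
  assert (Hk1 : N + 1 <= Z.of_nat k) by lia.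
  assert (Hk2 : P <= Z.of_nat k) by lia.
  clearbody k. split.
  - intros [[m r] al] HA. apply caseA; auto.
  - exists ((0,0),0). split.
    + unfold inA. left. lexcrunch.
    + pose proof (caseB N P HN HP ltac:(lia)) as C.
      replace (Z.to_nat N) with n in C by lia. exact C.
Qed.
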